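(* Let $(f,L)$ satisfy the usual conditions and let $\Omega^\star=\{\liminf_{t\to\infty}Z(t)>0\}$. If $S>0$, then $\mathbb P$-almost surely on $\Omega^\star$, \[\liminf_{t\to\infty}\frac{\log|\hat N(t)|}{\int_0^t\big(r-\frac12f'(s)^2-\frac{\pi^2}{8L(s)^2}+\frac{L'(s)}{2L(s)}\big)ds}\ge1.\]
   Context: Branching Brownian motion (BBM) with branching rate $r>0$: under $\mathbb P$ we start with a single particle at $0$; each particle moves as a standard one-dimensional Brownian motion independently of all others, lives for an independent exponential time with parameter $r$, and then is replaced by two children at its current position, which evolve independently in the same way. $N(t)$ is the set of particles alive at time $t$; for $u\in N(t)$ and $s\le t$, $X_u(s)$ denotes the position at time $s$ of $u$ or of its ancestor alive at time $s$. Given continuous $f:[0,\infty)\to\mathbb R$ and $L:[0,\infty)\to(0,\infty)$, let $\hat N(t)=\{u\in N(t): |X_u(s)-f(s)|<L(s)\ \forall s\le t\}$. When $f,L$ are twice continuously differentiable, set $E(t)=|f'(t)|L(t)+\int_0^t|f''(s)|L(s)ds+\frac12|L'(t)|L(t)+\frac12\int_0^t|L''(s)|L(s)ds$ and $S=\liminf_{t\to\infty}\frac1t\int_0^t\big(r-\frac12 f'(s)^2-\frac{\pi^2}{8L(s)^2}+\frac{L'(s)}{2L(s)}\big)ds$. The pair $(f,L)$ satisfies the usual conditions if (I) $f(0)=0$; (II) $f$ and $L$ are twice continuously differentiable; (III) $E(t)/t\to0$; (IV) $S\in(-\infty,\infty)$. For $u\in N(t)$ define $G_u(t)=\exp\Big(\int_0^t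 f'(s)dX_u(s)-\frac12\int_0^t f'(s)^2ds+\int_0^t\frac{\pi^2}{8L(s)^2}ds+\frac{L'(t)}{2L(t)}(X_u(t)-f(t))^2-\int_0^t\big(\frac{L''(s)}{2L(s)}(X_u(s)-f(s))^2+\frac{L'(s)}{2L(s)}\big)ds\Big)$, $\zeta_u(t)=G_u(t)\cos\big(\frac{\pi}{2L(t)}(X_u(t)-f(t))\big)\mathbf 1_{\{|X_u(s)-f(s)|<L(s)\ \forall s\le t\}}$, and $Z(t)=\sum_{u\in N(t)}e^{-rt}\zeta_u(t)$. *)

(* Defs.v *)
From HB Require Import structures.
From mathcomp Require Import all_boot all_order all_algebra finmap.
From mathcomp Require Import all_classical all_reals all_analysis.
Set Implicit Arguments. Unset Strict Implicit. Unset Printing Implicit Defensive.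
Import Order.TTheory GRing.Theory Num.Theory.
Import numFieldNormedType.Exports.
Local Open Scope classical_set_scope.
Local Open Scope ring_scope.

Section Defs.
Context {R : realType}.

Definition liminf_oo (g : R -> \bar R) : \bar R :=
  ereal_sup [set ereal_inf [set g t | t in `[T, +oo[%classic] | T in [set: R]].

Definition int0 (t : R) (h : R -> R) : R :=
  Rintegral lebesgue_measure `[0, t]%classic h.

Definition C2 (f : R -> R) : Prop :=
  (forall x, derivable f x 1) /\ (forall x, derivable (derive1 f) x 1) /\
  continuous (derive1n 2 f).

Definition lnE (x : \bar R) : \bar R :=
  match x with
  | r%:E => if (r <= 0)%R then -oo else (ln r)%:E
  | +oo => +oo
  | -oo => -oo
  end%E.

Definition Efl (f L : R -> R) (t : R) : R :=
  `|derive1 f t| * L t + int0 t (fun s => `|derive1n 2 f s| * L s)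
  + 2^-1 * `|derive1 L t| * L t + 2^-1 * int0 t (fun s => `|derive1n 2 L s| * L s).

Definition integrand (r : R) (f L : R -> R) (s : R) : R :=
  r - 2^-1 * (derive1 f s) ^+ 2 - pi ^+ 2 / (8 * L s ^+ 2) + derive1 L s / (2 * L s).

Definition Iint (r : R) (f L : R -> R) (t : R) : R := int0 t (integrand r f L).

Definition Sfl (r : R) (f L : R -> R) : \bar R :=
  liminf_oo (fun t => (Iint r f L t / t)%:E).

Definition usual_conditions (r : R) (f L : R -> R) : Prop :=
  [/\ f 0 = 0, C2 f /\ C2 L,
      (fun t => Efl f L t / t) @ +oo --> 0
    & Sfl r f L \is a fin_num].

Definition sigmaRV {d} {T : measurableType d} (I : Type) (D : set I)
  (X : I -> T -> R) : set (set T) :=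
  <<s \bigcup_(i in D) preimage_set_system [set: T] (X i) measurable >>.

Definition mutually_independent {d} {T : measurableType d}
  (P : probability T R) (K : choiceType) (F : K -> set (set T)) : Prop :=
  forall (J : {fset K}) (A : K -> set T),
    (forall k, k \in J -> F k (A k)) ->
    P (\bigcap_(k in [set` J]) A k) = (\prod_(k <- J) P (A k))%E.

Definition is_exponential {d} {T : measurableType d} (P : probability T R)
  (r : R) (X : T -> R) : Prop :=
  measurable_fun [set: T] X /\
  forall A : set R, measurable A -> P (X @^-1` A) = exponential_prob r A.

Definition is_brownian {d} {T : measurableType d} (P : probability T R)
  (B : T -> R -> R) : Prop :=
  [/\ forall w, B w 0 = 0,
      forall w, {within `[0, +oo[%classic, continuous (B w)},
      forall t, 0 <= t -> measurable_fun [set: T] (fun w => B w t),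
      forall s t, 0 <= s < t -> forall A : set R, measurable A ->
        P [set w | A (B w t - B w s)] = normal_prob 0 (Num.sqrt (t - s)) A
    & (* independent increments: B t - B s is independent of (B v, v <= s) *)
      forall s t, 0 <= s < t ->
        mutually_independent P (fun b : bool =>
          if b then sigmaRV [set: unit] (fun _ w => B w t - B w s)
          else sigmaRV `[0, s]%classic (fun v w => B w v))].

(* Particles are labelled by u : seq bool; the root is [::] and the two
   children of u are true :: u and false :: u.  tau u is the lifetime of
   particle u and B u its driving Brownian motion (started afresh at 0). *)
Definition label := seq bool.

Section BBM.
Context {T : Type} (tau : label -> T -> R) (B : label -> T -> R -> R).

Fixpoint birth (w : T) (u : label) : R :=
  match u with
  | [::] => 0
  | _ :: v => birth w v + tau v w
  end.

(* X_u(s): position at time s of u, or of its ancestor alive at time s *)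
Fixpoint pos (w : T) (u : label) (s : R) : R :=
  match u with
  | [::] => B [::] w s
  | _ :: v => let b := birth w u in
      if s < b then pos w v s else pos w v b + B u w (s - b)
  end.

Definition alive (t : R) (w : T) : set label :=
  [set u | birth w u <= t < birth w u + tau u w].

Definition in_tube (f L : R -> R) (t : R) (w : T) (u : label) : Prop :=
  forall s, 0 <= s <= t -> `|pos w u s - f s| < L s.

Definition Nhat (f L : R -> R) (t : R) (w : T) : set label :=
  [set u | alive t w u /\ in_tube f L t w u].

Definition card_Nhat (f L : R -> R) (t : R) (w : T) : \bar R :=
  \esum_(u in Nhat f L t w) 1%E.

(* Ito integral \int_0^t f'(s) dX_u(s) for the deterministic C^1 integrand
   f', i.e. the (pathwise) Riemann-Stieltjes integral, written via
   integration by parts *)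
Definition stoch_int (f : R -> R) (t : R) (w : T) (u : label) : R :=
  derive1 f t * pos w u t - derive1 f 0 * pos w u 0
  - int0 t (fun s => pos w u s * derive1n 2 f s).

Definition Gu (f L : R -> R) (t : R) (w : T) (u : label) : R :=
  let Y s := pos w u s - f s in
  expR (stoch_int f t w u - 2^-1 * int0 t (fun s => (derive1 f s) ^+ 2)
        + int0 t (fun s => pi ^+ 2 / (8 * L s ^+ 2))
        + derive1 L t / (2 * L t) * Y t ^+ 2
        - int0 t (fun s => derive1n 2 L s / (2 * L s) * Y s ^+ 2 + derive1 L s / (2 * L s))).

Definition zeta (f L : R -> R) (t : R) (w : T) (u : label) : R :=
  Gu f L t w u * cos (pi / (2 * L t) * (pos w u t - f t))
  * (\1_[set v | in_tube f L t w v] u).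

Definition Zmart (r : R) (f L : R -> R) (t : R) (w : T) : \bar R :=
  \esum_(u in alive t w) (expR (- r * t) * zeta f L t w u)%:E.

End BBM.
End Defs.

(* Main.v *)
Require Import Defs.
From HB Require Import structures.
From mathcomp Require Import all_boot all_order all_algebra finmap.
From mathcomp Require Import all_classical all_reals all_analysis.
From mathcomp Require Import ring lra.
Import Order.TTheory GRing.Theory Num.Theory.
Import numFieldNormedType.Exports.
Local Open Scope classical_set_scope.
Local Open Scope ring_scope.

Lemma cvg_sqr (R : realType) (T : Type) (F : set_system T) (FF : Filter F) (g : T -> R) (a : R) :
  g x @[x --> F] --> a -> (g x ^+ 2) @[x --> F] --> a ^+ 2.
Proof. move=> h; rewrite expr2; under eq_fun do rewrite expr2; exact: cvgM. Qed.
Arguments cvg_sqr {R T F FF g a}.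



Lemma int_cont (R : realType) (t : R) (h : R -> R) :
  {in `[0, t]%classic, continuous h} -> lebesgue_measure.-integrable `[0, t] (EFin \o h).
Proof.
move=> ch; apply: continuous_compact_integrable; first exact: segment_compact.
exact: continuous_in_subspaceT.
Qed.

Lemma C2_facts (R : realType) (f : R -> R) : C2 f ->
  [/\ continuous f, continuous (derive1 f) & continuous (derive1n 2 f)].
Proof.
move=> [d1 [d2 c2]]; split; last exact: c2.
- by move=> x; apply/differentiable_continuous; rewrite -derivable1_diffP.
- by move=> x; apply/differentiable_continuous; rewrite -derivable1_diffP.
Qed.

Lemma meas_itv (R : realType) (t : R) : 0 <= t -> fine (lebesgue_measure (`[0, t]%classic : set R)) = t.
Proof.
move=> t0; rewrite lebesgue_measure_itv /= lte_fin.
case: ltP => [_|]; first by rewrite /= subr0.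
by move=> tl; have -> : t = 0 by apply/eqP; rewrite eq_le tl t0.
Qed.

Lemma mem_itv01 (R : realType) (t x : R) : x \in (`[0, t]%classic : set R) -> 0 <= x <= t.
Proof. by rewrite inE /= in_itv /=. Qed.

Lemma ibp (R : realType) (f : R -> R) (t : R) : C2 f -> 0 < t ->
  \int[lebesgue_measure]_(x in `[0, t]%classic) (f x * derive1n 2 f x) =
  (f t * derive1 f t - f 0 * derive1 f 0) - \int[lebesgue_measure]_(x in `[0, t]%classic) (derive1 f x * derive1 f x).
Proof.
move=> Cf t0; have [cf cd1 cd2] := @C2_facts _ _ Cf.
have [df [dd1 _]] := Cf.
apply: (@Rintegration_by_parts R f (derive1 f) (derive1 f) (derive1n 2 f)).
- exact: t0.
- exact: (continuous_subspaceT cd1).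
- split; first by move=> x _; exact: df.
  + exact: (cvg_at_right_filter (cf 0)).
  + exact: (cvg_at_left_filter (cf t)).
- by move=> x _.
- exact: (continuous_subspaceT cd2).
- split; first by move=> x _; exact: dd1.
  + exact: (cvg_at_right_filter (cd1 0)).
  + exact: (cvg_at_left_filter (cd1 t)).
- by move=> x _.
Qed.


Lemma bnd_sq (R : realType) (a l y : R) : 0 < l -> `|y| < l ->
  `|a / (2 * l) * y ^+ 2| <= 2^-1 * (`|a| * l).
Proof.
move=> l0 yl.
have y2 : `|y| ^+ 2 <= l ^+ 2 by have := normr_ge0 y; nra.
rewrite normrM normrX normrM normfV (gtr0_norm (_ : 0 < 2 * l)); last by rewrite mulr_gt0.
apply: (le_trans (ler_wpM2l _ y2)).
  by rewrite mulr_ge0 // invr_ge0 mulr_ge0 // ltW.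
rewrite le_eqVlt; apply/orP; left; apply/eqP; field.
by rewrite gt_eqF.
Qed.

Lemma arith (R : realType) (r t d1t Xt d10 X0 ft A IY P q J1 K Ef El nd1t nd10 nl1 Lt L0 : R) :
  d1t * (Xt - ft) <= nd1t * Lt -> - (d10 * (X0 - 0)) <= nd10 * L0 -> - IY <= Ef ->
  q <= 2^-1 * (nl1 * Lt) -> - J1 <= 2^-1 * El ->
  d1t * Xt - d10 * X0 - (ft * d1t - 0 * d10 - A + IY) - 2^-1 * A + P + q - (J1 + K) - r * t <=
  - (r * t - 2^-1 * A - P + K) + (nd1t * Lt + Ef + 2^-1 * nl1 * Lt + 2^-1 * El) + nd10 * L0.
Proof. move=> *; lra. Qed.

Lemma key (R : realType) (r : R) (f L X : R -> R) (t : R) :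
  C2 f -> C2 L -> f 0 = 0 -> (forall s, 0 <= s -> 0 < L s) -> continuous X -> 0 < t ->
  (forall s, 0 <= s <= t -> `|X s - f s| < L s) ->
  derive1 f t * X t - derive1 f 0 * X 0 - int0 t (fun s => X s * derive1n 2 f s)
  - 2^-1 * int0 t (fun s => (derive1 f s) ^+ 2) + int0 t (fun s => pi ^+ 2 / (8 * L s ^+ 2))
  + derive1 L t / (2 * L t) * (X t - f t) ^+ 2
  - int0 t (fun s => derive1n 2 L s / (2 * L s) * (X s - f s) ^+ 2 + derive1 L s / (2 * L s))
  - r * t
  <= - Iint r f L t + Efl f L t + `|derive1 f 0| * L 0.
Proof.
move=> Cf CL f0 Lpos cX t0 tube.
have [cf cd1 cd2] := @C2_facts _ _ Cf.
have [cL cl1 cl2] := @C2_facts _ _ CL.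
have E2 := @ibp R f t Cf t0.
rewrite /Iint /Efl /int0 /integrand.
move: E2 cd1 cd2 cl1 cl2.
generalize (derive1 f) (derive1n 2 f) (derive1 L) (derive1n 2 L) => d1 d2 l1 l2 E2 cd1 cd2 cl1 cl2.
have Lne : forall x, x \in (`[0, t]%classic : set R) -> L x != 0.
  by move=> x /mem_itv01 /andP[x0 _]; rewrite gt_eqF // Lpos.
have ci : forall h, {in `[0, t]%classic, continuous h} -> lebesgue_measure.-integrable `[0, t] (EFin \o h) := @int_cont R t.
have ciL : forall h, (forall x, L x != 0 -> 2 * L x != 0 -> 8 * L x ^+ 2 != 0 -> {for x, continuous h}) ->
    lebesgue_measure.-integrable `[0, t] (EFin \o h).
  move=> h H; apply: ci => x xI; have Lx := Lne x xI; apply: H => //.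
    by rewrite mulf_neq0.
  by rewrite mulf_neq0 // expf_neq0.
have iXd2 : lebesgue_measure.-integrable `[0, t] (EFin \o (fun s => X s * d2 s)).
  apply: ciL => x Lx L2 L8; exact: (cvgM (cX x) (cd2 x)).
have ifd2 : lebesgue_measure.-integrable `[0, t] (EFin \o (fun s => f s * d2 s)).
  apply: ciL => x Lx L2 L8; exact: (cvgM (cf x) (cd2 x)).
have iYd2 : lebesgue_measure.-integrable `[0, t] (EFin \o (fun s => (X s - f s) * d2 s)).
  apply: ciL => x Lx L2 L8; exact: (cvgM (cvgB (cX x) (cf x)) (cd2 x)).
have iA : lebesgue_measure.-integrable `[0, t] (EFin \o (fun s => d1 s ^+ 2)).
  apply: ciL => x Lx L2 L8; exact: (cvg_sqr (cd1 x)).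
have iPi : lebesgue_measure.-integrable `[0, t] (EFin \o (fun s => pi ^+ 2 / (8 * L s ^+ 2))).
  apply: ciL => x Lx L2 L8; exact: (cvgM (cvg_cst _) (cvgV L8 (cvgM (cvg_cst _) (cvg_sqr (cL x))))).
have iJ1 : lebesgue_measure.-integrable `[0, t] (EFin \o (fun s => l2 s / (2 * L s) * (X s - f s) ^+ 2)).
  apply: ciL => x Lx L2 L8; exact: (cvgM (cvgM (cl2 x) (cvgV L2 (cvgM (cvg_cst _) (cL x)))) (cvg_sqr (cvgB (cX x) (cf x)))).
have iK : lebesgue_measure.-integrable `[0, t] (EFin \o (fun s => l1 s / (2 * L s))).
  apply: ciL => x Lx L2 L8; exact: (cvgM (cl1 x) (cvgV L2 (cvgM (cvg_cst _) (cL x)))).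
have ir : lebesgue_measure.-integrable `[0, t] (EFin \o (fun s => r)).
  apply: ciL => x Lx L2 L8; exact: (cvg_cst _).
have iA2 : lebesgue_measure.-integrable `[0, t] (EFin \o (fun s => 2^-1 * d1 s ^+ 2)).
  apply: ciL => x Lx L2 L8; exact: (cvgM (cvg_cst _) (cvg_sqr (cd1 x))).
have ir1 : lebesgue_measure.-integrable `[0, t] (EFin \o (fun s => r - 2^-1 * d1 s ^+ 2)).
  apply: ciL => x Lx L2 L8; exact: (cvgB (cvg_cst _) (cvgM (cvg_cst _) (cvg_sqr (cd1 x)))).
have ir2 : lebesgue_measure.-integrable `[0, t] (EFin \o (fun s => r - 2^-1 * d1 s ^+ 2 - pi ^+ 2 / (8 * L s ^+ 2))).
  apply: ciL => x Lx L2 L8; exact: (cvgB (cvgB (cvg_cst _) (cvgM (cvg_cst _) (cvg_sqr (cd1 x)))) (cvgM (cvg_cst _) (cvgV L8 (cvgM (cvg_cst _) (cvg_sqr (cL x)))))).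
have iB3 : lebesgue_measure.-integrable `[0, t] (EFin \o (fun s => `|(X s - f s) * d2 s|)).
  apply: ciL => x Lx L2 L8; exact: (cvg_norm (cvgM (cvgB (cX x) (cf x)) (cd2 x))).
have iB3' : lebesgue_measure.-integrable `[0, t] (EFin \o (fun s => `|d2 s| * L s)).
  apply: ciL => x Lx L2 L8; exact: (cvgM (cvg_norm (cd2 x)) (cL x)).
have iB5 : lebesgue_measure.-integrable `[0, t] (EFin \o (fun s => `|l2 s / (2 * L s) * (X s - f s) ^+ 2|)).
  apply: ciL => x Lx L2 L8; exact: (cvg_norm (cvgM (cvgM (cl2 x) (cvgV L2 (cvgM (cvg_cst _) (cL x)))) (cvg_sqr (cvgB (cX x) (cf x))))).
have iB5' : lebesgue_measure.-integrable `[0, t] (EFin \o (fun s => 2^-1 * (`|l2 s| * L s))).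
  apply: ciL => x Lx L2 L8; exact: (cvgM (cvg_cst _) (cvgM (cvg_norm (cl2 x)) (cL x))).
have iB5'' : lebesgue_measure.-integrable `[0, t] (EFin \o (fun s => `|l2 s| * L s)).
  apply: ciL => x Lx L2 L8; exact: (cvgM (cvg_norm (cl2 x)) (cL x)).
have E1 : (\int[lebesgue_measure]_(x in `[0, t]%classic) (X x * d2 x)) =
    (\int[lebesgue_measure]_(x in `[0, t]%classic) (f x * d2 x)) +
    (\int[lebesgue_measure]_(x in `[0, t]%classic) ((X x - f x) * d2 x)).
  rewrite -(RintegralD _ ifd2 iYd2) //; apply: eq_Rintegral => s _; ring.
have E3 : (\int[lebesgue_measure]_(x in `[0, t]%classic) (d1 x * d1 x)) =
    (\int[lebesgue_measure]_(x in `[0, t]%classic) (d1 x ^+ 2)).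
  by apply: eq_Rintegral => s _; rewrite expr2.
have E4 : \int[lebesgue_measure]_(x in `[0, t]%classic)
     (r - 2^-1 * d1 x ^+ 2 - pi ^+ 2 / (8 * L x ^+ 2) + l1 x / (2 * L x)) =
    r * t - 2^-1 * (\int[lebesgue_measure]_(x in `[0, t]%classic) (d1 x ^+ 2))
    - (\int[lebesgue_measure]_(x in `[0, t]%classic) (pi ^+ 2 / (8 * L x ^+ 2)))
    + (\int[lebesgue_measure]_(x in `[0, t]%classic) (l1 x / (2 * L x))).
  rewrite (RintegralD _ ir2 iK) // (RintegralB _ ir1 iPi) // (RintegralB _ ir iA2) //.
  by rewrite (RintegralZl _ _ iA) // Rintegral_cst // (@meas_itv R t (ltW t0)).
have E5 : \int[lebesgue_measure]_(x in `[0, t]%classic)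
     (l2 x / (2 * L x) * (X x - f x) ^+ 2 + l1 x / (2 * L x)) =
    (\int[lebesgue_measure]_(x in `[0, t]%classic) (l2 x / (2 * L x) * (X x - f x) ^+ 2))
    + (\int[lebesgue_measure]_(x in `[0, t]%classic) (l1 x / (2 * L x))).
  by rewrite (RintegralD _ iJ1 iK).
have tubeI : forall s, s \in (`[0, t]%classic : set R) -> `|X s - f s| < L s.
  by move=> s /mem_itv01 st; apply: tube.
have H3 : `|(\int[lebesgue_measure]_(x in `[0, t]%classic) ((X x - f x) * d2 x))| <=
    (\int[lebesgue_measure]_(x in `[0, t]%classic) (`|d2 x| * L x)).
  apply: (le_trans (le_normr_Rintegral _ iYd2)); first by [].
  apply: (le_Rintegral _ iB3 iB3'); first by []. move=> s sI.
  rewrite normrM mulrC; apply: ler_wpM2l; first exact: normr_ge0.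
  by apply: ltW; apply: tubeI; rewrite inE.
have B3 : - (\int[lebesgue_measure]_(x in `[0, t]%classic) ((X x - f x) * d2 x)) <=
    (\int[lebesgue_measure]_(x in `[0, t]%classic) (`|d2 x| * L x)).
  by rewrite lerNl; exact: (lerNnormlW H3).
have B5 : - (\int[lebesgue_measure]_(x in `[0, t]%classic) (l2 x / (2 * L x) * (X x - f x) ^+ 2)) <=
    2^-1 * (\int[lebesgue_measure]_(x in `[0, t]%classic) (`|l2 x| * L x)).
  suff H : `|(\int[lebesgue_measure]_(x in `[0, t]%classic) (l2 x / (2 * L x) * (X x - f x) ^+ 2))| <=
    2^-1 * (\int[lebesgue_measure]_(x in `[0, t]%classic) (`|l2 x| * L x)) by rewrite lerNl; exact: (lerNnormlW H).
  apply: (le_trans (le_normr_Rintegral _ iJ1)); first by [].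
  rewrite -(RintegralZl _ _ iB5'') //.
  apply: (le_Rintegral _ iB5 iB5'); first by []. move=> s sI.
  have sI' : s \in (`[0, t]%classic : set R) by rewrite inE.
  apply: bnd_sq; last exact: tubeI.
  by move: sI' => /mem_itv01 /andP[s0 _]; apply: Lpos.
have L0 : 0 < L 0 by apply: Lpos.
have Lt : 0 < L t by apply: Lpos; apply: ltW.
have t0I : (0:R) <= 0 <= t by rewrite lexx ltW.
have ttI : t \in (`[0, t]%classic : set R) by rewrite inE /= in_itv /= lexx ltW.
have B1 : d1 t * (X t - f t) <= `|d1 t| * L t.
  apply: (le_trans (ler_norm _)); rewrite normrM; apply: ler_wpM2l; first exact: normr_ge0.
  by apply: ltW; apply: tubeI.
have B2 : - (d1 0 * (X 0 - f 0)) <= `|d1 0| * L 0.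
  suff H : `|d1 0 * (X 0 - f 0)| <= `|d1 0| * L 0 by rewrite lerNl; exact: (lerNnormlW H).
  rewrite normrM; apply: ler_wpM2l; first exact: normr_ge0.
  by apply: ltW; apply: tube.
have B4 : l1 t / (2 * L t) * (X t - f t) ^+ 2 <= 2^-1 * (`|l1 t| * L t).
  apply: (le_trans (ler_norm _)); apply: bnd_sq => //; exact: tubeI.
rewrite E1 E2 E3 E4 E5 f0.
move: B1 B2 B3 B4 B5; rewrite f0.
set P1 := (\int[lebesgue_measure]_(x in `[0, t]%classic) (pi ^+ 2 / (8 * L x ^+ 2))).
set A1 := (\int[lebesgue_measure]_(x in `[0, t]%classic) (d1 x ^+ 2)).
set Ef1 := (\int[lebesgue_measure]_(x in `[0, t]%classic) (`|d2 x| * L x)).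
set El1 := (\int[lebesgue_measure]_(x in `[0, t]%classic) (`|l2 x| * L x)).
set IY := (\int[lebesgue_measure]_(x in `[0, t]%classic) ((X x - f x) * d2 x)).
set J1 := (\int[lebesgue_measure]_(x in `[0, t]%classic) (l2 x / (2 * L x) * (X x - f x) ^+ 2)).
set K1 := (\int[lebesgue_measure]_(x in `[0, t]%classic) (l1 x / (2 * L x))).
move=> h1 h2 h3 h4 h5; clearbody IY J1 K1 P1 A1 Ef1 El1; lra.
Qed.

Lemma ext_cont (R : realType) (h : R -> R) : {within `[0, +oo[, continuous h} ->
  continuous (fun x : R => h (2^-1 * (x + `|x|))).
Proof.
move=> /subspace_continuousP ch x.
set m := fun x : R => 2^-1 * (x + `|x|).
have m0 : forall y, `[0, +oo[%classic (m y).
  move=> y; rewrite /= in_itv /= andbT /m mulr_ge0 // ?invr_ge0 //.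
  by rewrite -lerBlDl sub0r; apply: (le_trans (ler_norm _)); rewrite normrN.
have cm : m z @[z --> x] --> m x.
  exact: (cvgM (cvg_cst _) (cvgD cvg_id (cvg_norm cvg_id))).
have hm := ch (m x) (m0 x).
apply: (cvg_comp _ _ _ hm) => P HP.
rewrite nbhs_filterE; move: (cm _ HP); rewrite nbhs_filterE => /= H; apply: (filterS _ H) => y Hy; exact: Hy (m0 y).
Qed.

Definition mp {R : realType} (x : R) : R := 2^-1 * (x + `|x|).

Lemma mp_pos (R : realType) (x : R) : 0 <= x -> mp x = x.
Proof. by move=> x0; rewrite /mp ger0_norm //; field. Qed.

Lemma mp_neg (R : realType) (x : R) : x <= 0 -> mp x = 0.
Proof. by move=> x0; rewrite /mp ler0_norm // subrr mulr0. Qed.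

Lemma mp_cont (R : realType) : continuous (@mp R).
Proof. move=> x; exact: (cvgM (cvg_cst _) (cvgD cvg_id (cvg_norm cvg_id))). Qed.

Lemma shift_cont (R : realType) (g : R -> R) (c : R) : continuous g -> continuous (fun x => g (x - c)).
Proof.
move=> cg x; apply: (continuous_comp (f := fun x => x - c)); last exact: cg.
exact: (cvgB cvg_id (cvg_cst _)).
Qed.

Lemma pos_ext (R : realType) (T : Type) (tau : label -> T -> R) (B : label -> T -> R -> R) (w : T) :
  (forall u, B u w 0 = 0) -> (forall u, {within `[0, +oo[, continuous (B u w)}) ->
  forall u, exists g : R -> R, continuous g /\ forall s, 0 <= s -> g s = pos tau B w u s.
Proof.
move=> B0 Bc; elim=> [|b v [gv [cgv hgv]]].
  exists (fun x => B [::] w (mp x)); split; first exact: (@ext_cont _ _ (Bc [::])).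
  by move=> s s0 /=; rewrite mp_pos.
set bb := birth tau w (b :: v).
have cBt : continuous (fun x => B (b :: v) w (mp (x - bb))).
  exact: (@shift_cont _ _ bb (@ext_cont _ _ (Bc (b :: v)))).
case: (leP 0 bb) => bb0.
- exists (fun x => gv (x - mp (x - bb)) + B (b :: v) w (mp (x - bb))); split.
    move=> x; apply: cvgD; last exact: cBt.
    apply: (continuous_comp (f := fun x => x - mp (x - bb))); last exact: cgv.
    exact: (cvgB cvg_id (@shift_cont _ _ bb (@mp_cont R) x)).
  move=> s s0 /=; rewrite -/bb; case: ltP => sb.
  + rewrite mp_neg; last by rewrite subr_le0 ltW.
    by rewrite subr0 B0 addr0 hgv.
  + rewrite mp_pos; last by rewrite subr_ge0.
    by rewrite opprB addrCA subrr addr0 hgv.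
- exists (fun x => pos tau B w v bb + B (b :: v) w (mp (x - bb))); split.
    move=> x; apply: cvgD; [exact: cvg_cst | exact: cBt].
  move=> s s0 /=; rewrite -/bb; case: ltP => sb.
  + by move: bb0 s0 sb; rewrite /bb /=; lra.
  + by rewrite mp_pos // subr_ge0.
Qed.

Lemma zeta_bound (R : realType) (T : Type) (tau : label -> T -> R) (B : label -> T -> R -> R)
  (r : R) (f L : R -> R) (w : T) (t : R) (u : label) :
  C2 f -> C2 L -> f 0 = 0 -> (forall s, 0 <= s -> 0 < L s) -> 0 < t ->
  (exists g : R -> R, continuous g /\ forall s, 0 <= s -> g s = pos tau B w u s) ->
  in_tube tau B f L t w u ->
  expR (- r * t) * zeta tau B f L t w u <=
  expR (- Iint r f L t + Efl f L t + `|derive1 f 0| * L 0).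
Proof.
move=> Cf CL f0 Lpos t0 [g [cg hg]] tb.
have tube : forall s, 0 <= s <= t -> `|g s - f s| < L s.
  by move=> s /andP[s0 st]; rewrite hg //; apply: tb; rewrite s0.
have K := @key R r f L g t Cf CL f0 Lpos cg t0 tube.
rewrite /zeta indicE mem_set // mulr1.
have cos1 := cos_le1 (pi / (2 * L t) * (pos tau B w u t - f t)).
set G := Gu tau B f L t w u.
have G0 : 0 <= G by rewrite /G /Gu /= ltW // expR_gt0.
apply: (@le_trans _ _ (expR (- r * t) * G)).
  by apply: ler_wpM2l; [exact: ltW (expR_gt0 _) | rewrite -[leRHS]mulr1; exact: ler_wpM2l].
rewrite /G /Gu /stoch_int /= -expRD ler_expR.
have eqI : forall h : R -> R -> R,
    \int[lebesgue_measure]_(x in `[0, t]%classic) (h (pos tau B w u x) x) =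
    \int[lebesgue_measure]_(x in `[0, t]%classic) (h (g x) x).
  move=> h; apply: eq_Rintegral => s /mem_itv01 /andP[s0 _]; by rewrite hg.
rewrite /int0.
rewrite (eqI (fun p x => p * derive1n 2 f x)).
rewrite (eqI (fun p x => derive1n 2 L x / (2 * L x) * (p - f x) ^+ 2 + derive1 L x / (2 * L x))).
rewrite -(hg t (ltW t0)) -(hg 0 (lexx 0)).
move: K; rewrite /int0 => K.
lra.
Qed.

Lemma esum_cst_le (R : realType) (T : choiceType) (S : set T) (c : R) : 0 <= c ->
  (\esum_(i in S) c%:E <= c%:E * \esum_(i in S) 1)%E.
Proof.
move=> c0; apply: ge_ereal_sup => /= x [A [finA AS] <-].
rewrite -[X in (X <= _)%E](_ : \sum_(i \in A) (c%:E * 1)%E = _); last first.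
  by apply: eq_fsbigr => i _; rewrite mule1.
rewrite -ge0_mule_fsumr //; apply: lee_wpmul2l; first by rewrite lee_fin.
by apply: ereal_sup_ubound; exists A.
Qed.

Lemma Z_bound (R : realType) (T : Type) (tau : label -> T -> R) (B : label -> T -> R -> R)
  (r : R) (f L : R -> R) (w : T) (t : R) :
  C2 f -> C2 L -> f 0 = 0 -> (forall s, 0 <= s -> 0 < L s) -> 0 < t ->
  (forall u, exists g : R -> R, continuous g /\ forall s, 0 <= s -> g s = pos tau B w u s) ->
  (Zmart tau B r f L t w <=
   (expR (- Iint r f L t + Efl f L t + `|derive1 f 0| * L 0))%:E * card_Nhat tau B f L t w)%E.
Proof.
move=> Cf CL f0 Lpos t0 ext.
set K := expR _.
rewrite /Zmart /card_Nhat.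
apply: (@le_trans _ _ (\esum_(u in alive tau t w) (if u \in [set v | in_tube tau B f L t w v] then K%:E else 0%E))).
  apply: le_esum => u _; case: ifP => tin.
    rewrite lee_fin; apply: (@zeta_bound R T tau B r f L w t u Cf CL f0 Lpos t0 (ext u)).
    by move: tin; rewrite inE.
  by rewrite /zeta indicE tin !mulr0.
rewrite -esum_mkcondr.
exact: esum_cst_le (ltW (expR_gt0 _)).
Qed.



Lemma main_det (R : realType) (T : Type) (tau : label -> T -> R) (B : label -> T -> R -> R)
  (r : R) (f L : R -> R) (w : T) :
  C2 f -> C2 L -> f 0 = 0 -> (forall s, 0 <= s -> 0 < L s) ->
  (fun t => Efl f L t / t) @ +oo --> 0 ->
  Sfl r f L \is a fin_num -> (0 < Sfl r f L)%E ->
  (forall u, exists g : R -> R, continuous g /\ forall s, 0 <= s -> g s = pos tau B w u s) ->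
  (0 < liminf_oo (fun t => Zmart tau B r f L t w))%E ->
  (1 <= liminf_oo (fun t => lnE (card_Nhat tau B f L t w) * ((Iint r f L t)^-1)%:E))%E.
Proof.
move=> Cf CL f0 Lpos Econv Sfin Spos ext hZ.
have [c0 c0p [T0 HT0]] : exists2 c0 : R, 0 < c0 &
    exists T0 : R, forall t, T0 <= t -> (c0%:E <= Zmart tau B r f L t w)%E.
  move: hZ; rewrite /liminf_oo => /ereal_sup_gt [y [T0 _ <-] y0].
  have Hinf : forall t, T0 <= t -> (ereal_inf [set Zmart tau B r f L t0 w | t0 in `[T0, +oo[%classic]
      <= Zmart tau B r f L t w)%E.
    by move=> t Tt; apply: ereal_inf_lbound; exists t => //; rewrite /= in_itv /= andbT.
  move: (ereal_inf _) y0 Hinf => z y0 Hinf.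
  case: z y0 Hinf => [z| |] y0 Hinf.
  - by exists z; [rewrite -lte_fin | exists T0].
  - exists 1; first by [].
    by exists T0 => t Tt; apply: le_trans (Hinf t Tt); exact: leey.
  - by [].
case Sdef: (Sfl r f L) Sfin Spos => [sr| |] // _ Spos'.
have sr0 : 0 < sr by rewrite -lte_fin.
have [T1 HT1] : exists T1 : R, forall t, T1 <= t -> sr / 2 < Iint r f L t / t.
  have : ((sr / 2)%:E < Sfl r f L)%E by rewrite Sdef lte_fin; lra.
  rewrite /Sfl /liminf_oo => /ereal_sup_gt [y [T1 _ <-] y0].
  exists T1 => t Tt; rewrite -lte_fin; apply: lt_le_trans y0 _.
  by apply: ereal_inf_lbound; exists t => //; rewrite /= in_itv /= andbT.
set c := `|derive1 f 0| * L 0.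
apply/lee_addgt0Pr => e e0.
set F := fun t => (lnE (card_Nhat tau B f L t w) * ((Iint r f L t)^-1)%:E)%E.
suff H : ((1 - e)%:E <= liminf_oo F)%E.
  move: H; case: (liminf_oo F) => [x| |] //= H.
  - by rewrite lee_fin; move: H; rewrite lee_fin; lra.
  - by rewrite leey.
set d := e * sr / 4.
have d0 : 0 < d by rewrite /d; apply: divr_gt0; [apply: mulr_gt0 | ].
have [M HM] : exists M : R, forall t, M < t -> Efl f L t / t < d.
  have := (cvgrPdist_lt _ _).1 Econv d d0; move=> [M [_ HM]].
  exists M => t Mt; have := HM t Mt; rewrite sub0r normrN => h.
  exact: le_lt_trans (ler_norm _) h.
set T2 := 4 * `|c - ln c0| / (e * sr).
have T20 : 0 <= T2 by rewrite /T2 divr_ge0 // ?mulr_ge0 // ltW // mulr_gt0.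
set Tb := 1 + `|T0| + `|T1| + `|M| + T2.
have Hinf : ((1 - e)%:E <= ereal_inf [set F t | t in `[Tb, +oo[%classic])%E.
  apply/ereal_infP => _ [t tI <-].
  move: tI; rewrite /= in_itv /= andbT /Tb => tb.
  have := ler_norm T0; have := ler_norm T1; have := ler_norm M.
  have := normr_ge0 T0; have := normr_ge0 T1; have := normr_ge0 M.
  move=> n1 n2 n3 n4 n5 n6.
  have t0 : 0 < t by lra.
  have tT0 : T0 <= t by lra.
  have tT1 : T1 <= t by lra.
  have tM : M < t by lra.
  have tT2 : T2 <= t by lra.
  have hZt := HT0 t tT0.
  have hZb := @Z_bound R T tau B r f L w t Cf CL f0 Lpos t0 ext.
  have hI : sr / 2 * t < Iint r f L t by rewrite -ltr_pdivlMr //; exact: HT1.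
  have hE : Efl f L t < d * t by rewrite -ltr_pdivrMr //; exact: HM.
  have hc : `|c - ln c0| <= d * t.
    move: tT2; rewrite /T2 ler_pdivrMr ?mulr_gt0 // => h; rewrite /d; lra.
  have hc' := ler_norm (c - ln c0).
  have Ipos : 0 < Iint r f L t.
    have h : 0 < sr / 2 * t by rewrite mulr_gt0 // divr_gt0.
    exact: lt_trans h hI.
  have cge0 : (0 <= card_Nhat tau B f L t w)%E by apply: esum_ge0.
  rewrite /F; move: hZb cge0.
  set K := expR _.
  have K0 : 0 < K by apply: expR_gt0.
  case: (card_Nhat tau B f L t w) => [n| |] hZb cge0.
  - have cK : c0 <= K * n by rewrite -lee_fin EFinM; exact: le_trans hZt hZb.
    have n0 : 0 < n by rewrite -(pmulr_rgt0 _ K0); exact: lt_le_trans c0p cK.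
    have hl : ln c0 <= - Iint r f L t + Efl f L t + c + ln n.
      move: cK; rewrite -ler_ln ?posrE ?mulr_gt0 // lnM ?posrE // /K expRK.
      by [].
    have heI : e * (sr / 2 * t) <= e * Iint r f L t by apply: ler_wpM2l; [exact: ltW | exact: ltW].
    rewrite /lnE (leNgt n 0) n0 /= -EFinM lee_fin ler_pdivlMr //.
    move: hE hc hc' hl heI; rewrite /d; lra.
  - rewrite /lnE gt0_mulye ?leey // lte_fin invr_gt0 //.
  - by [].
apply: (le_trans Hinf); rewrite /liminf_oo; apply: ereal_sup_ubound; by exists Tb.
Qed.

Theorem proposition2 (R : realType) (d : measure_display) (Omega : measurableType d)
  (P : probability Omega R) (r : R)
  (tau : label -> Omega -> R) (B : label -> Omega -> R -> R)
  (f L : R -> R) :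
  0 < r ->
  (forall u, is_exponential P r (tau u)) ->
  (forall u, is_brownian P (B u)) ->
  mutually_independent P (fun k : label + label =>
    match k with
    | inl u => sigmaRV [set: unit] (fun _ => tau u)
    | inr u => sigmaRV `[0, +oo[%classic (fun t w => B u w t)
    end) ->
  (forall s, 0 <= s -> 0 < L s) ->
  usual_conditions r f L ->
  (0 < Sfl r f L)%E ->
  {ae P, forall w,
     (0 < liminf_oo (fun t => Zmart tau B r f L t w))%E ->
     (1 <= liminf_oo (fun t =>
        lnE (card_Nhat tau B f L t w) * ((Iint r f L t)^-1)%:E))%E}.
Proof.
move=> _ _ hB _ Lpos [f0 [Cf CL] Econv Sfin] Spos.
apply: aeW => w hZ.
have B0 : forall u, B u w 0 = 0 by move=> u; have [h _ _ _ _] := hB u; exact: h.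
have Bc : forall u, {within `[0, +oo[, continuous (B u w)}.
  by move=> u; have [_ h _ _ _] := hB u; exact: h.
exact: (@main_det R Omega tau B r f L w Cf CL f0 Lpos Econv Sfin Spos
  (@pos_ext R Omega tau B w B0 Bc) hZ).
Qed.
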